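(* Let $\omega_s,R_s,R_r,L_s,L_r,L_m>0$ with $L_s>L_m$, $L_r>L_m$, $\sigma=1-\frac{L_m^2}{L_sL_r}$, let $A$, $B$ be the $4\times4$ and $4\times 2$ matrices $$A=\begin{bmatrix} -\frac{R_s}{\sigma L_s} & \omega_s & \frac{R_sL_m}{\sigma L_sL_r} & 0 \\ -\omega_s & -\frac{R_s}{\sigma L_s} & 0 & \frac{R_sL_m}{\sigma L_sL_r}\\ \frac{R_rL_m}{\sigma L_sL_r} & 0 & -\frac{R_r}{\sigma L_r} & \omega_s \\ 0 & \frac{R_rL_m}{\sigma L_sL_r} & -\omega_s & -\frac{R_r}{\sigma L_r} \end{bmatrix},\qquad B=\begin{bmatrix}0_{2\times2}\\ I_{2\times 2}\end{bmatrix},$$ and let $K\in\mathbb{R}^{2\times4}$ be such that $A-BK$ is asymptotically stable. Fix $v_{ds},v_{qs}\in\mathbb{R}$. For $u=(u_1,u_2)\in\mathbb{R}^2$ let $x(u)=-(A-BK)^{-1}[v_{ds}\;v_{qs}\;u_1\;u_2]^T$ and $T_e(u)=\frac{L_m}{\sigma L_sL_r}\big(x_1(u)x_4(u)-x_2(u)x_3(u)\big)$, and write $T_e(u)=u^TQu+b^Tu+a$ with $Q\in\mathbb{R}^{2\times2}$ symmetric, $b\in\mathbb{R}^2$, $a\in\mathbb{R}$ (this $Q$ is positive definite). Then $$a-\tfrac14\, b^TQ^{-1}b=-\frac{v_{ds}^2+v_{qs}^2}{4\omega_sR_s},$$ independently of $K$, $R_r$, $L_s$, $L_r$, $L_m$.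 Equivalently, $\min_{u\in\mathbb{R}^2}T_e(u)=-\frac{v_{ds}^2+v_{qs}^2}{4\omega_sR_s}<0$ whenever $(v_{ds},v_{qs})\neq(0,0)$.
   Context: $T_e$ models the electromagnetic torque of a doubly fed induction generator at the steady state of its electrical dynamics $\dot x=(A-BK)x+[v_{ds}\;v_{qs}\;u_1\;u_2]^T$, with $x=(\varphi_{ds},\varphi_{qs},\varphi_{dr},\varphi_{qr})$ the stator/rotor fluxes. *)

(* Defs.v *)
From HB Require Import structures.
From mathcomp Require Import all_boot all_order all_algebra.
Set Implicit Arguments. Unset Strict Implicit. Unset Printing Implicit Defensive.
Import Order.TTheory GRing.Theory Num.Theory.
Local Open Scope ring_scope.

Section DFIG.
Variable R : rcfType.

(* Evaluation of a real polynomial p at the complex number x + i y,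
   returned as the pair (real part, imaginary part) (Horner scheme). *)
Definition ceval (p : {poly R}) (x y : R) : R * R :=
  foldr (fun c (z : R * R) => (z.1 * x - z.2 * y + c, z.1 * y + z.2 * x))
        (0, 0) (polyseq p).

(* M is asymptotically stable (Hurwitz): every complex eigenvalue
   x + i y of M (root of its characteristic polynomial) has x < 0. *)
Definition hurwitz (n : nat) (M : 'M[R]_n) : Prop :=
  forall x y : R, ceval (char_poly M) x y = (0, 0) -> x < 0.

Definition dfig_sigma (Ls Lr Lm : R) : R := 1 - Lm ^+ 2 / (Ls * Lr).

(* The 4x4 matrix A (indices 0..3 correspond to rows/columns 1..4). *)
Definition dfig_A (ws Rs Rr Ls Lr Lm : R) : 'M[R]_4 :=
  let s := dfig_sigma Ls Lr Lm in
  \matrix_(i < 4, j < 4)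
   match nat_of_ord i, nat_of_ord j with
   | 0, 0 => - (Rs / (s * Ls))
   | 0, 1 => ws
   | 0, 2 => Rs * Lm / (s * Ls * Lr)
   | 1, 0 => - ws
   | 1, 1 => - (Rs / (s * Ls))
   | 1, 3 => Rs * Lm / (s * Ls * Lr)
   | 2, 0 => Rr * Lm / (s * Ls * Lr)
   | 2, 2 => - (Rr / (s * Lr))
   | 2, 3 => ws
   | 3, 1 => Rr * Lm / (s * Ls * Lr)
   | 3, 2 => - ws
   | 3, 3 => - (Rr / (s * Lr))
   | _, _ => 0
   end.

Definition dfig_B : 'M[R]_(4, 2) :=
  \matrix_(i < 4, j < 2) (if nat_of_ord i == (nat_of_ord j + 2)%N then 1 else 0).

Definition dfig_x (ws Rs Rr Ls Lr Lm : R) (K : 'M[R]_(2, 4)) (vds vqs : R)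
  (u : 'cV[R]_2) : 'cV[R]_4 :=
  - (invmx (dfig_A ws Rs Rr Ls Lr Lm - dfig_B *m K)
       *m \col_(i < 4) [:: vds; vqs; u 0 0; u 1 0]`_i).

Definition dfig_Te (ws Rs Rr Ls Lr Lm : R) (K : 'M[R]_(2, 4)) (vds vqs : R)
  (u : 'cV[R]_2) : R :=
  let x := dfig_x ws Rs Rr Ls Lr Lm K vds vqs u in
  Lm / (dfig_sigma Ls Lr Lm * Ls * Lr) *
    (x 0 0 * x 3 0 - x 1 0 * x 2 0).

End DFIG.

(* Main.v *)
Require Import Defs.
From HB Require Import structures.
From mathcomp Require Import all_boot all_order all_algebra.
From Stdlib Require Import Ring Field.
Import Order.TTheory GRing.Theory Num.Theory.
Local Open Scope ring_scope.
Section S.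
Variable R : rcfType.
Definition addR (x y : R) : R := x + y.
Definition mulR (x y : R) : R := x * y.
Definition oppR (x : R) : R := - x.
Definition invR (x : R) : R := x^-1.
Definition zeroR : R := 0.
Definition oneR : R := 1.
Lemma Rth : ring_theory zeroR oneR addR mulR (fun x y => addR x (oppR y)) oppR (@eq R).
Proof. rewrite /addR /mulR /oppR /zeroR /oneR. split=> //; [exact: add0r|exact: addrC|exact: addrA|exact: mul1r|exact: mulrC|exact: mulrA|exact: mulrDl|exact: subrr]. Qed.
Add Ring Rring : Rth.
Lemma Fth : field_theory zeroR oneR addR mulR (fun x y => addR x (oppR y)) oppR (fun x y => mulR x (invR y)) invR (@eq R).
Proof. split=> //; [exact: Rth| rewrite /zeroR /oneR; apply/eqP; exact: oner_neq0 | rewrite /mulR /invR /zeroR /oneR=> p Hp; rewrite mulrC mulfV //; exact/eqP]. Qed.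
Add Field Rfield : Fth.
Lemma eqR (a b : R) : a = b -> a = b. Proof. by []. Qed.
Lemma addRE (x y : R) : x + y = addR x y. Proof. by []. Qed.
Lemma mulRE (x y : R) : x * y = mulR x y. Proof. by []. Qed.
Lemma oppRE (x : R) : - x = oppR x. Proof. by []. Qed.
Lemma invRE (x : R) : x^-1 = invR x. Proof. by []. Qed.
Lemma zeroRE : 0 = zeroR :> R. Proof. by []. Qed.
Lemma oneRE : 1 = oneR :> R. Proof. by []. Qed.
Fixpoint natR (n : nat) : R := match n with O => zeroR | S m => addR oneR (natR m) end.
Lemma natRE n : n%:R = natR n :> R.
Proof. elim: n => [|n IH] //=; by rewrite -IH mulrS. Qed.
Ltac rnorm := apply: eqR; rewrite ?expr2 ?natRE; cbn [natR]; rewrite ?invRE ?mulRE ?oppRE ?addRE ?zeroRE ?oneRE.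
Lemma ceval0 (p : {poly R}) (x : R) : ceval p x 0 = (p.[x], 0).
Proof.
rewrite /ceval /horner; elim: (polyseq p) => [|c s IH] //=.
by rewrite IH /= !mulr0 subr0 mul0r addr0.
Qed.

Variables (ws Rs Rr Ls Lr Lm : R) (K : 'M[R]_(2, 4)) (vds vqs : R).
Let M := dfig_A ws Rs Rr Ls Lr Lm - dfig_B R *m K.
Lemma M_unit : hurwitz M -> M \in unitmx.
Proof.
move=> hK; apply/negPn/negP => hn.
have h0 : ceval (char_poly M) 0 0 = (0, 0).
  rewrite ceval0 horner_coef0 char_poly_det.
  move: hn; rewrite unitmxE unitfE negbK => /eqP ->; by rewrite mulr0.
by have := hK _ _ h0; rewrite ltxx.
Qed.

Definition wv (u : 'cV[R]_2) : 'cV[R]_4 := \col_(i < 4) [:: vds; vqs; u 0 0; u 1 0]`_i.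
Let xx u := dfig_x ws Rs Rr Ls Lr Lm K vds vqs u.
Lemma Mx (hM : M \in unitmx) u : M *m xx u = - wv u.
Proof. by rewrite /xx /dfig_x mulmxN mulmxA mulmxV // mul1mx. Qed.

Definition o0 : 'I_4 := @Ordinal 4 0 isT.
Definition o1 : 'I_4 := @Ordinal 4 1 isT.
Definition o2 : 'I_4 := @Ordinal 4 2 isT.
Definition o3 : 'I_4 := @Ordinal 4 3 isT.
Lemma sum4 (F : 'I_4 -> R) : \sum_j F j = F o0 + F o1 + F o2 + F o3.
Proof. rewrite !big_ord_recl big_ord0 addr0 !addrA. by repeat f_equal; apply: val_inj. Qed.
Lemma sum2 (F : 'I_2 -> R) : \sum_j F j = F 0 + F 1.
Proof. rewrite !big_ord_recl big_ord0 addr0. by repeat f_equal; apply: val_inj. Qed.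

Lemma rowi (hM : M \in unitmx) u i :
  M i o0 * xx u o0 0 + M i o1 * xx u o1 0 + M i o2 * xx u o2 0 + M i o3 * xx u o3 0 = - wv u i 0.
Proof.
move/matrixP: (Mx hM u) => /(_ i 0). by rewrite [in LHS]mxE sum4 [in RHS]mxE.
Qed.
Lemma Mentries :
  [/\ M o0 o0 = - (Rs / (dfig_sigma Ls Lr Lm * Ls)), M o0 o1 = ws, M o0 o2 = Rs * Lm / (dfig_sigma Ls Lr Lm * Ls * Lr), M o0 o3 = 0 &
   [/\ M o1 o0 = - ws, M o1 o1 = - (Rs / (dfig_sigma Ls Lr Lm * Ls)), M o1 o2 = 0 & M o1 o3 = Rs * Lm / (dfig_sigma Ls Lr Lm * Ls * Lr)]].
Proof. rewrite /M !mxE !sum2 !mxE /= !mul0r addr0 !subr0. by repeat split. Qed.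

Let a1 := Rs / (dfig_sigma Ls Lr Lm * Ls).
Let g := Rs * Lm / (dfig_sigma Ls Lr Lm * Ls * Lr).

Lemma E0 (hM : M \in unitmx) u :
  - a1 * xx u o0 0 + ws * xx u o1 0 + g * xx u o2 0 = - vds.
Proof.
have := rowi hM u o0. case: Mentries => [-> -> -> -> _].
have -> : wv u o0 0 = vds by rewrite mxE.
by rewrite mul0r addr0 => <-.
Qed.
Lemma E1 (hM : M \in unitmx) u :
  - ws * xx u o0 0 + - a1 * xx u o1 0 + g * xx u o3 0 = - vqs.
Proof.
have := rowi hM u o1. case: Mentries => _ _ _ _ [-> -> -> ->].
have -> : wv u o1 0 = vqs by rewrite mxE.
by rewrite mul0r addr0 => <-.
Qed.

Definition FF (x0 x1 : R) := ws * (x0 * x0 + x1 * x1) - vqs * x0 + vds * x1.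

Lemma TeE u : dfig_Te ws Rs Rr Ls Lr Lm K vds vqs u =
  Lm / (dfig_sigma Ls Lr Lm * Ls * Lr) * (xx u o0 0 * xx u o3 0 - xx u o1 0 * xx u o2 0).
Proof.
have i0 : (0 : 'I_4) = o0 by apply: val_inj.
have i1 : (1 : 'I_4) = o1 by apply: val_inj.
have i2 : (2%:R : 'I_4) = o2 by apply: val_inj.
have i3 : (3%:R : 'I_4) = o3 by apply: val_inj.
rewrite /dfig_Te i0 i1. by congr (_ * (_ * xx u _ 0 - _ * xx u _ 0)); apply: val_inj.
Qed.

Lemma TeF (hM : M \in unitmx) u :
  Rs * dfig_Te ws Rs Rr Ls Lr Lm K vds vqs u = FF (xx u o0 0) (xx u o1 0).
Proof.
rewrite TeE /FF; have e0 := E0 hM u; have e1 := E1 hM u.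
apply/eqP; rewrite -subr_eq0; apply/eqP.
transitivity (xx u o0 0 * (- ws * xx u o0 0 + - a1 * xx u o1 0 + g * xx u o3 0 + vqs)
   - xx u o1 0 * (- a1 * xx u o0 0 + ws * xx u o1 0 + g * xx u o2 0 + vds)).
  rewrite /g /a1; rnorm; ring.
by rewrite e0 e1 !addNr !mulr0 subr0.
Qed.

Lemma xE u i : xx u i 0 = - (invmx M i o0 * vds + invmx M i o1 * vqs + invmx M i o2 * u 0 0 + invmx M i o3 * u 1 0).
Proof. by rewrite /xx /dfig_x mxE mxE sum4 !mxE. Qed.


Hypotheses (hws : 0 < ws) (hRs : 0 < Rs) (hLs : 0 < Ls) (hLr : 0 < Lr) (hLm : 0 < Lm)
  (hLsm : Lm < Ls) (hLrm : Lm < Lr) (hK : hurwitz M).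
Variables (Q : 'M[R]_2) (b : 'cV[R]_2) (a : R).
Hypothesis hQsym : Q^T = Q.
Hypothesis hrep : forall u : 'cV[R]_2,
     dfig_Te ws Rs Rr Ls Lr Lm K vds vqs u
       = (u^T *m Q *m u) 0 0 + (b^T *m u) 0 0 + a.

Let hM := M_unit hK.
Lemma sg_gt0 : 0 < dfig_sigma Ls Lr Lm.
Proof.
rewrite /dfig_sigma subr_gt0 ltr_pdivrMr ?mul1r; last exact: mulr_gt0.
rewrite expr2; exact: ltr_pM (ltW hLm) (ltW hLm) hLsm hLrm.
Qed.
Lemma g_gt0 : 0 < g.
Proof. rewrite /g; apply: divr_gt0; first exact: mulr_gt0.
by apply: mulr_gt0 => //; apply: mulr_gt0 => //; exact: sg_gt0. Qed.

Definition qs (u0 u1 : R) := (u0 * Q 0 0 + u1 * Q 1 0) * u0 + (u0 * Q 0 1 + u1 * Q 1 1) * u1.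
Definition ls (u0 u1 : R) := b 0 0 * u0 + b 1 0 * u1.
Definition xs (i : 'I_4) (u0 u1 : R) := - (invmx M i o0 * vds + invmx M i o1 * vqs + invmx M i o2 * u0 + invmx M i o3 * u1).

Lemma qfE (u : 'cV[R]_2) : (u^T *m Q *m u) 0 0 = qs (u 0 0) (u 1 0).
Proof. by rewrite /qs !mxE !sum2 !mxE !sum2 !mxE. Qed.
Lemma linE (u : 'cV[R]_2) : (b^T *m u) 0 0 = ls (u 0 0) (u 1 0).
Proof. by rewrite /ls !mxE !sum2 !mxE. Qed.

Definition cv (u0 u1 : R) : 'cV[R]_2 := \col_(i < 2) [:: u0; u1]`_i.
Lemma cv0 u0 u1 : cv u0 u1 0 0 = u0. Proof. by rewrite mxE. Qed.
Lemma cv1 u0 u1 : cv u0 u1 1 0 = u1. Proof. by rewrite mxE. Qed.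

Lemma hT (u : 'cV[R]_2) : Rs * (qs (u 0 0) (u 1 0) + ls (u 0 0) (u 1 0) + a) =
   FF (xs o0 (u 0 0) (u 1 0)) (xs o1 (u 0 0) (u 1 0)).
Proof. by rewrite -qfE -linE -hrep TeF // !xE. Qed.

Lemma two0 : (2%:R : R) != 0. Proof. by rewrite pnatr_eq0. Qed.

Lemma key u0 u1 : Rs * qs u0 u1 =
  ws * ((invmx M o0 o2 * u0 + invmx M o0 o3 * u1) * (invmx M o0 o2 * u0 + invmx M o0 o3 * u1)
      + (invmx M o1 o2 * u0 + invmx M o1 o3 * u1) * (invmx M o1 o2 * u0 + invmx M o1 o3 * u1)).
Proof.
have h1 := hT (cv u0 u1); have h2 := hT (cv (- u0) (- u1)); have h3 := hT (cv 0 0).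
rewrite !cv0 !cv1 in h1 h2 h3.
apply: (mulfI two0); apply/eqP; rewrite -subr_eq0; apply/eqP.
transitivity ((Rs * (qs u0 u1 + ls u0 u1 + a) - FF (xs o0 u0 u1) (xs o1 u0 u1))
  + (Rs * (qs (-u0) (-u1) + ls (-u0) (-u1) + a) - FF (xs o0 (-u0) (-u1)) (xs o1 (-u0) (-u1)))
  - 2%:R * (Rs * (qs 0 0 + ls 0 0 + a) - FF (xs o0 0 0) (xs o1 0 0))).
  rewrite /qs /ls /xs /FF; rnorm; ring.
by rewrite h1 h2 h3 !subrr mulr0 addr0 subr0.
Qed.


Lemma sq_pos (x : R) : x != 0 -> 0 < x * x.
Proof. by move=> hx; rewrite -expr2 exprn_even_gt0 //= hx. Qed.
Lemma sq_ge0 (x : R) : 0 <= x * x.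
Proof. by rewrite -expr2 sqr_ge0. Qed.

Lemma hd u0 u1 k : xx (cv u0 u1) k 0 = xx (cv 0 0) k 0 - (invmx M k o2 * u0 + invmx M k o3 * u1).
Proof. rewrite !xE !cv0 !cv1; rnorm; ring. Qed.

Lemma wv2 u : wv u o2 0 = u 0 0. Proof. by rewrite mxE. Qed.
Lemma wv3 u : wv u o3 0 = u 1 0. Proof. by rewrite mxE. Qed.

Lemma inj u0 u1 : invmx M o0 o2 * u0 + invmx M o0 o3 * u1 = 0 ->
   invmx M o1 o2 * u0 + invmx M o1 o3 * u1 = 0 -> u0 = 0 /\ u1 = 0.
Proof.
move=> p0 p1.
have gn0 : g != 0 by rewrite gt_eqF // g_gt0.
have p2 : invmx M o2 o2 * u0 + invmx M o2 o3 * u1 = 0.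
  have e1 := E0 hM (cv u0 u1); have e2 := E0 hM (cv 0 0).
  rewrite (hd u0 u1 o0) (hd u0 u1 o1) (hd u0 u1 o2) p0 p1 !subr0 in e1.
  have : g * (invmx M o2 o2 * u0 + invmx M o2 o3 * u1) = 0.
    transitivity ((- a1 * xx (cv 0 0) o0 0 + ws * xx (cv 0 0) o1 0 + g * xx (cv 0 0) o2 0)
      - (- a1 * xx (cv 0 0) o0 0 + ws * xx (cv 0 0) o1 0 + g * (xx (cv 0 0) o2 0 - (invmx M o2 o2 * u0 + invmx M o2 o3 * u1)))).
      rnorm; ring.
    by rewrite e1 e2 subrr.
  by move/eqP; rewrite mulf_eq0 (negbTE gn0) /= => /eqP.
have p3 : invmx M o3 o2 * u0 + invmx M o3 o3 * u1 = 0.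
  have e1 := E1 hM (cv u0 u1); have e2 := E1 hM (cv 0 0).
  rewrite (hd u0 u1 o0) (hd u0 u1 o1) (hd u0 u1 o3) p0 p1 !subr0 in e1.
  have : g * (invmx M o3 o2 * u0 + invmx M o3 o3 * u1) = 0.
    transitivity ((- ws * xx (cv 0 0) o0 0 + - a1 * xx (cv 0 0) o1 0 + g * xx (cv 0 0) o3 0)
      - (- ws * xx (cv 0 0) o0 0 + - a1 * xx (cv 0 0) o1 0 + g * (xx (cv 0 0) o3 0 - (invmx M o3 o2 * u0 + invmx M o3 o3 * u1)))).
      rnorm; ring.
    by rewrite e1 e2 subrr.
  by move/eqP; rewrite mulf_eq0 (negbTE gn0) /= => /eqP.
have r2 := rowi hM (cv u0 u1) o2; have r2' := rowi hM (cv 0 0) o2.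
have r3 := rowi hM (cv u0 u1) o3; have r3' := rowi hM (cv 0 0) o3.
rewrite (hd u0 u1 o0) (hd u0 u1 o1) (hd u0 u1 o2) (hd u0 u1 o3) p0 p1 p2 p3 !subr0 r2' in r2.
rewrite (hd u0 u1 o0) (hd u0 u1 o1) (hd u0 u1 o2) (hd u0 u1 o3) p0 p1 p2 p3 !subr0 r3' in r3.
move/oppr_inj: r2; move/oppr_inj: r3; rewrite !wv2 !wv3 !cv0 !cv1 => -> ->; by split.
Qed.

Lemma pos (u : 'cV[R]_2) : u != 0 -> 0 < (u^T *m Q *m u) 0 0.
Proof.
move=> un0; rewrite qfE.
have hk := key (u 0 0) (u 1 0).
case: (boolP ((invmx M o0 o2 * u 0 0 + invmx M o0 o3 * u 1 0 == 0) &&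
              (invmx M o1 o2 * u 0 0 + invmx M o1 o3 * u 1 0 == 0))).
  case/andP => /eqP h0 /eqP h1; have [e0 e1] := @inj _ _ h0 h1.
  suff : u = 0 by move=> h; rewrite h eqxx in un0.
  apply/matrixP => i j; rewrite ord1 mxE; case: i => [[|[|//]]] Hi.
    by rewrite -e0; congr (u _ _); apply: val_inj.
  by rewrite -e1; congr (u _ _); apply: val_inj.
rewrite negb_and => hne.
have hS : 0 < (invmx M o0 o2 * u 0 0 + invmx M o0 o3 * u 1 0) * (invmx M o0 o2 * u 0 0 + invmx M o0 o3 * u 1 0)
      + (invmx M o1 o2 * u 0 0 + invmx M o1 o3 * u 1 0) * (invmx M o1 o2 * u 0 0 + invmx M o1 o3 * u 1 0).
  case/orP: hne => hne.
    by apply: ltr_wpDr; [exact: sq_ge0 | exact: sq_pos].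
  by rewrite addrC; apply: ltr_wpDr; [exact: sq_ge0 | exact: sq_pos].
have : 0 < Rs * qs (u 0 0) (u 1 0) by rewrite hk; exact: mulr_gt0.
by rewrite pmulr_rgt0.
Qed.

Lemma Q_unit : Q \in unitmx.
Proof.
apply/negPn/negP; rewrite unitmxE unitfE negbK => /det0P [v v0 vQ].
have vT : v^T != 0 by rewrite trmx_eq0.
have := @pos (v^T) vT. by rewrite trmxK vQ mul0mx mxE ltxx.
Qed.


Lemma nz2 : natR 2 <> zeroR. Proof. rewrite -natRE; apply/eqP; exact: two0. Qed.
Lemma nz4 : natR 4 <> zeroR. Proof. rewrite -natRE; apply/eqP; by rewrite pnatr_eq0. Qed.
Lemma n2' : addR oneR oneR <> zeroR.
Proof. rewrite /addR /oneR /zeroR -mulr2n; apply/eqP; exact: two0. Qed.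
Lemma n4' : mulR (addR oneR oneR) (addR oneR oneR) <> zeroR.
Proof. rewrite /mulR; apply/eqP; rewrite mulf_neq0 //; apply/eqP; exact: n2'. Qed.
Let h : R := 2%:R^-1.
Let us : 'cV[R]_2 := - (h *: (invmx Q *m b)).

Lemma hQus : Q *m us = - (h *: b).
Proof. by rewrite /us mulmxN -scalemxAr mulmxA mulmxV ?Q_unit // mul1mx. Qed.

Lemma trsc (x y : 'cV[R]_2) : (x^T *m y) 0 0 = (y^T *m x) 0 0.
Proof.
move/matrixP: (trmx_mul (x^T) y) => /(_ 0 0).
by rewrite trmxK [in LHS]mxE => ->.
Qed.

Lemma Tus : dfig_Te ws Rs Rr Ls Lr Lm K vds vqs us = a - (b^T *m invmx Q *m b) 0 0 / 4%:R.
Proof.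
rewrite hrep.
have e1 : (us^T *m Q *m us) 0 0 = - h * (b^T *m us) 0 0.
  by rewrite -mulmxA hQus mulmxN -scalemxAr mxE mxE mulNr trsc.
have e2 : (b^T *m us) 0 0 = - h * (b^T *m invmx Q *m b) 0 0.
  by rewrite /us mulmxN -scalemxAr mulmxA mxE mxE mulNr.
rewrite e1 e2 /h. rnorm. field. repeat split; [exact n4' | exact n2'].
Qed.


Lemma mul_nz (x y : R) : x <> zeroR -> y <> zeroR -> mulR x y <> zeroR.
Proof. rewrite /mulR /zeroR => /eqP hx /eqP hy; apply/eqP; exact: mulf_neq0. Qed.
Lemma ws0 : ws <> zeroR. Proof. apply/eqP; by rewrite gt_eqF. Qed.
Lemma Rs0 : Rs <> zeroR. Proof. apply/eqP; by rewrite gt_eqF. Qed.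
Lemma g0 : g <> zeroR. Proof. apply/eqP; by rewrite gt_eqF // g_gt0. Qed.
Ltac sides := repeat split; repeat (first [ exact n2' | exact n4' | exact ws0 | exact Rs0 | exact g0 | apply mul_nz ]).

Let m := - ((vds ^+ 2 + vqs ^+ 2) / (4%:R * ws * Rs)).

Lemma FF_lb x0 x1 : - ((vds ^+ 2 + vqs ^+ 2) / (4%:R * ws)) <= FF x0 x1.
Proof.
rewrite -subr_ge0.
have -> : FF x0 x1 - - ((vds ^+ 2 + vqs ^+ 2) / (4%:R * ws)) =
   ws * ((x0 - vqs / (2%:R * ws)) ^+ 2 + (x1 + vds / (2%:R * ws)) ^+ 2).
  rewrite /FF; rnorm; field; sides.
by apply: mulr_ge0; [exact: ltW | apply: addr_ge0; exact: sqr_ge0].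
Qed.

Lemma Te_lb u : m <= dfig_Te ws Rs Rr Ls Lr Lm K vds vqs u.
Proof.
have := FF_lb (xx u o0 0) (xx u o1 0); rewrite -TeF // => H.
rewrite -subr_ge0.
have -> : dfig_Te ws Rs Rr Ls Lr Lm K vds vqs u - m =
  (Rs * dfig_Te ws Rs Rr Ls Lr Lm K vds vqs u - - ((vds ^+ 2 + vqs ^+ 2) / (4%:R * ws))) / Rs.
  rewrite /m; rnorm; field; sides.
by rewrite divr_ge0 // ?subr_ge0 // ltW.
Qed.

Lemma Mrow0 (x : 'cV[R]_4) : (M *m x) o0 0 = - a1 * x o0 0 + ws * x o1 0 + g * x o2 0.
Proof. rewrite mxE sum4; case: Mentries => -> -> -> -> _; by rewrite mul0r addr0. Qed.
Lemma Mrow1 (x : 'cV[R]_4) : (M *m x) o1 0 = - ws * x o0 0 + - a1 * x o1 0 + g * x o3 0.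
Proof. rewrite mxE sum4; case: Mentries => _ _ _ _ [-> -> -> ->]; by rewrite mul0r addr0. Qed.

Lemma Te_uo : exists uo, dfig_Te ws Rs Rr Ls Lr Lm K vds vqs uo = m.
Proof.
pose X0 := vqs / (2%:R * ws). pose X1 := - vds / (2%:R * ws).
pose X2 := (a1 * X0 - ws * X1 - vds) / g. pose X3 := (ws * X0 + a1 * X1 - vqs) / g.
pose xo : 'cV[R]_4 := \col_(i < 4) [:: X0; X1; X2; X3]`_i.
pose wo := - (M *m xo).
exists (cv (wo o2 0) (wo o3 0)).
have hw : wv (cv (wo o2 0) (wo o3 0)) = wo.
  apply/matrixP => i j; rewrite ord1; case: i => [[|[|[|[|//]]]] Hi].
  - have -> : Ordinal Hi = o0 by apply: val_inj.
    rewrite [LHS]mxE /= /wo [RHS]mxE Mrow0 !mxE /= /X2; rnorm; field; sides.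
  - have -> : Ordinal Hi = o1 by apply: val_inj.
    rewrite [LHS]mxE /= /wo [RHS]mxE Mrow1 !mxE /= /X3; rnorm; field; sides.
  - have -> : Ordinal Hi = o2 by apply: val_inj.
    by rewrite [LHS]mxE /= cv0.
  - have -> : Ordinal Hi = o3 by apply: val_inj.
    by rewrite [LHS]mxE /= cv1.
have hx : xx (cv (wo o2 0) (wo o3 0)) = xo.
  rewrite /xx /dfig_x; change (- (invmx M *m wv (cv (wo o2 0) (wo o3 0))) = xo).
  by rewrite hw /wo mulmxN opprK mulmxA mulVmx // mul1mx.
apply: (mulfI (_ : Rs != 0)); first by rewrite gt_eqF.
rewrite TeF // hx !mxE /= /FF /X0 /X1 /m; rnorm; field; sides.
Qed.


Lemma Tdiff u : dfig_Te ws Rs Rr Ls Lr Lm K vds vqs us <= dfig_Te ws Rs Rr Ls Lr Lm K vds vqs u.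
Proof.
have Qs : Q 1 0 = Q 0 1 by move/matrixP: hQsym => /(_ 0 1); rewrite mxE.
have r0 : Q 0 0 * us 0 0 + Q 0 1 * us 1 0 = - (h * b 0 0).
  transitivity ((Q *m us) 0 0); first by rewrite [RHS]mxE sum2.
  by rewrite hQus !mxE.
have r1 : Q 0 1 * us 0 0 + Q 1 1 * us 1 0 = - (h * b 1 0).
  transitivity ((Q *m us) 1 0); first by rewrite [RHS]mxE sum2 Qs.
  by rewrite hQus !mxE.
have h2 : 1 - 2%:R * h = 0 :> R by rewrite /h mulfV ?subrr // two0.
have nd : 0 <= ((u - us)^T *m Q *m (u - us)) 0 0.
  case: (eqVneq (u - us) 0) => [->|hn]; first by rewrite trmx0 !mul0mx mxE.
  exact: ltW (@pos (u - us) hn).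
rewrite -subr_ge0.
suff -> : dfig_Te ws Rs Rr Ls Lr Lm K vds vqs u - dfig_Te ws Rs Rr Ls Lr Lm K vds vqs us =
   ((u - us)^T *m Q *m (u - us)) 0 0 by [].
rewrite !hrep !qfE !linE.
have -> : (u - us) 0 0 = u 0 0 - us 0 0 by rewrite !mxE.
have -> : (u - us) 1 0 = u 1 0 - us 1 0 by rewrite !mxE.
apply/eqP; rewrite -subr_eq0; apply/eqP.
transitivity ((u 0 0 - us 0 0) * (2%:R * (Q 0 0 * us 0 0 + Q 0 1 * us 1 0 + h * b 0 0))
   + (u 1 0 - us 1 0) * (2%:R * (Q 0 1 * us 0 0 + Q 1 1 * us 1 0 + h * b 1 0))
   + ((u 0 0 - us 0 0) * b 0 0 + (u 1 0 - us 1 0) * b 1 0) * (1 - 2%:R * h)).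
  rewrite /qs /ls Qs; rnorm; ring.
by rewrite r0 r1 h2 !addNr !mulr0 !addr0.
Qed.

Lemma main_sec : (forall u : 'cV[R]_2, u != 0 -> 0 < (u^T *m Q *m u) 0 0) /\
  a - (b^T *m invmx Q *m b) 0 0 / 4%:R
    = - ((vds ^+ 2 + vqs ^+ 2) / (4%:R * ws * Rs)).
Proof.
split; first exact: pos.
rewrite -Tus; have [uo huo] := Te_uo.
apply: le_anti; rewrite Te_lb andbT; apply: (le_trans (Tdiff uo)); rewrite huo; exact: lexx.
Qed.

End S.

Theorem mainTheorem2 (R : rcfType) (ws Rs Rr Ls Lr Lm : R)
  (hws : 0 < ws) (hRs : 0 < Rs) (hRr : 0 < Rr) (hLs : 0 < Ls) (hLr : 0 < Lr)
  (hLm : 0 < Lm) (hLsm : Lm < Ls) (hLrm : Lm < Lr)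
  (K : 'M[R]_(2, 4))
  (hK : hurwitz (dfig_A ws Rs Rr Ls Lr Lm - dfig_B R *m K))
  (vds vqs : R) (Q : 'M[R]_2) (b : 'cV[R]_2) (a : R)
  (hQsym : Q^T = Q)
  (hrep : forall u : 'cV[R]_2,
     dfig_Te ws Rs Rr Ls Lr Lm K vds vqs u
       = (u^T *m Q *m u) 0 0 + (b^T *m u) 0 0 + a) :
  (forall u : 'cV[R]_2, u != 0 -> 0 < (u^T *m Q *m u) 0 0) /\
  a - (b^T *m invmx Q *m b) 0 0 / 4%:R
    = - ((vds ^+ 2 + vqs ^+ 2) / (4%:R * ws * Rs)).
Proof. exact (@main_sec R ws Rs Rr Ls Lr Lm K vds vqs hws hRs hLs hLr hLm hLsm hLrm hK Q b a hQsym hrep). Qed.
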